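(* Let $a,b\in\mathbb{Q}_3$ with $\gamma(a)=3$, $\gamma(b)=0$ and $(b_0,b_1)=(1,0)$ or $(2,2)$. Then $x=\sum_{k\ge0}x_k3^k\in\mathbb{Z}_3^*$ is a solution of $x^3+ax=b$ if and only if the congruences $$x_0^3\equiv b_0\pmod3,\qquad x_0^3\equiv b_0+3b_1\pmod9,$$ $$x_0^2x_1+M_1(x_0)\equiv b_2\pmod3,$$ $$x_0^2x_2+P_3^2(x_0,x_1)+x_0a_0+x_0x_1^2+M_2(x_0,x_1)\equiv b_3\pmod3,$$ $$x_0^2x_{k-1}+P_k^{k-1}(x_0,\dots,x_{k-2})+2x_0x_1x_{k-2}+x_{k-3}a_0+x_{k-4}a_1+\dots+x_0a_{k-3}+M_{k-1}(x_0,\dots,x_{k-2})\equiv b_k\pmod3,\quad k\ge4,$$ are fulfilled, where the integers $M_k(x_0,\dots,x_{k-1})$ are defined by $$x_0^3=b_0+3b_1+9M_1(x_0),$$ $$x_0^2x_1=b_2-M_1(x_0)+3M_2(x_0,x_1),$$ $$x_0^2x_2+P_3^2(x_0,x_1)+x_0a_0+x_0x_1^2=b_3-M_2(x_0,x_1)+3M_3(x_0,x_1,x_2),$$ $$x_0^2x_{k-1}+P_k^{k-1}(x_0,\dots,x_{k-2})+2x_0x_1x_{k-2}+x_{k-3}a_0+\dots+x_0a_{k-3}=b_k-M_{k-1}(x_0,\dots,x_{k-2})+3M_k(x_0,\dots,x_{k-1}),\quad k\ge4.$$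
   Context: Write $a=3^{\gamma(a)}(a_0+a_13+a_23^2+\dots)$, $b=3^{\gamma(b)}(b_0+b_13+b_23^2+\dots)$ in canonical form, with digits $a_j,b_j\in\{0,1,2\}$, $a_0,b_0\ne0$, $\gamma(a),\gamma(b)\in\mathbb{Z}$. $\mathbb{Z}_3^*$ is the set of $3$-adic units; $x\in\mathbb{Z}_3^*$ is written $x=x_0+x_13+x_23^2+\dots$ with $x_j\in\{0,1,2\}$, $x_0\ne0$. For $j\le k$, $P_k^j(x_0,\dots,x_{j-1})=\sum\frac{6}{m_0!\cdots m_{j-1}!}x_0^{m_0}\cdots x_{j-1}^{m_{j-1}}$, the sum over nonnegative integers $m_0,\dots,m_{j-1}$ with $\sum_{i=0}^{j-1}m_i=3$ and $\sum_{i=1}^{j-1}im_i=k$. *)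

(* Defs.v *)
From mathcomp Require Import all_boot all_order all_algebra.
Set Implicit Arguments. Unset Strict Implicit. Unset Printing Implicit Defensive.
Import Order.TTheory GRing.Theory Num.Theory.
Local Open Scope ring_scope.

Definition digits3 (d : nat -> nat) : Prop := forall k, (d k < 3)%N.

(* Truncation sum_{k<n} d_k 3^k, an integer congruent mod 3^n to the 3-adic
   integer with digits d. *)
Definition trunc3 (d : nat -> nat) (n : nat) : int :=
  \sum_(k < n) (d k)%:Z * 3 ^+ k.

(* With a = 3^3 (a_0 + a_1 3 + ...) (gamma(a) = 3), b = b_0 + b_1 3 + ...
   (gamma(b) = 0) and x = x_0 + x_1 3 + ..., the equation x^3 + a x = b holds
   in Q_3 (all three numbers lie in Z_3 = lim Z/3^n) iff it holds modulo 3^n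
   for every n, computed on truncations. *)
Definition cubic_solution (a b x : nat -> nat) : Prop :=
  forall n : nat,
    ((trunc3 x n) ^+ 3 + 3 ^+ 3 * trunc3 a n * trunc3 x n
       == trunc3 b n %[mod (3 ^+ n)%R])%Z.

(* P_k^j(x_0,...,x_{j-1}) = sum 6/(m_0!...m_{j-1}!) x_0^{m_0}...x_{j-1}^{m_{j-1}}
   over m_i >= 0 with sum m_i = 3 and sum i m_i = k (each m_i <= 3, so
   m ranges over functions 'I_j -> 'I_4). *)
Definition Pkj (k j : nat) (x : nat -> int) : int :=
  \sum_(m : {ffun 'I_j -> 'I_4} |
          ((\sum_(i < j) (m i : nat) == 3)%N &&
           (\sum_(i < j) (i : nat) * (m i : nat) == k)%N))
     ((6 %/ \prod_(i < j) (m i : nat)`!)%N)%:Z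
       * \prod_(i < j) x i ^+ (m i : nat).

Definition zd (d : nat -> nat) : nat -> int := fun k => (d k)%:Z.

Definition Eterm (a x : nat -> nat) (k : nat) : int :=
  let X := zd x in let A := zd a in
  if k == 2%N then X 0%N ^+ 2 * X 1%N
  else if k == 3%N then
    X 0%N ^+ 2 * X 2%N + Pkj 3 2 X + X 0%N * A 0%N + X 0%N * X 1%N ^+ 2
  else
    X 0%N ^+ 2 * X k.-1 + Pkj k k.-1 X + 2 * X 0%N * X 1%N * X k.-2
    + \sum_(i < k.-2) X (k - 3 - i)%N * A i.

(* M_1 = (x_0^3 - b_0 - 3 b_1)/9, M_k = (E_k + M_{k-1} - b_k)/3 for k >= 2
   (integer division; the congruences below say these divisions are exact).
   M_0 is unused. *)
Fixpoint Mseq (a b x : nat -> nat) (k : nat) : int :=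
  match k with
  | O => 0
  | S O => (((zd x 0%N) ^+ 3 - zd b 0%N - 3 * zd b 1%N) %/ 9)%Z
  | S ((S _) as k1) => ((Eterm a x k + Mseq a b x k1 - zd b k) %/ 3)%Z
  end.

Definition congruences (a b x : nat -> nat) : Prop :=
  [/\ ((zd x 0%N) ^+ 3 == zd b 0%N %[mod 3])%Z,
      ((zd x 0%N) ^+ 3 == zd b 0%N + 3 * zd b 1%N %[mod 9])%Z &
      forall k : nat, (2 <= k)%N ->
        (Eterm a x k + Mseq a b x k.-1 == zd b k %[mod 3])%Z].

(* Main.v *)
Require Import Defs.
From mathcomp Require Import all_boot all_order all_algebra.
From mathcomp Require Import zify ring.
Set Implicit Arguments. Unset Strict Implicit. Unset Printing Implicit Defensive.
Import Order.TTheory GRing.Theory Num.Theory.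
Local Open Scope ring_scope.

Definition extf (j : nat) (r : 'I_4) (m : {ffun 'I_j -> 'I_4}) : {ffun 'I_j.+1 -> 'I_4} :=
  [ffun i : 'I_j.+1 => if @unlift j.+1 ord_max i is Some i' then m i' else r].

Lemma extf_lift j r m (i : 'I_j) : extf r m (lift ord_max i) = m i.
Proof. by rewrite ffunE liftK. Qed.
Lemma extf_max j r (m : {ffun 'I_j -> 'I_4}) : extf r m ord_max = r.
Proof. by rewrite ffunE unlift_none. Qed.

Lemma sum_ffunS (j : nat) (F : {ffun 'I_j.+1 -> 'I_4} -> int) :
  \sum_(m : {ffun 'I_j.+1 -> 'I_4}) F m =
  \sum_(r : 'I_4) \sum_(m' : {ffun 'I_j -> 'I_4}) F (extf r m').
Proof.
rewrite pair_big /=.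
rewrite (reindex (fun p : 'I_4 * {ffun 'I_j -> 'I_4} => extf p.1 p.2)) //=.
exists (fun m : {ffun 'I_j.+1 -> 'I_4} => (m ord_max, [ffun i => m (lift ord_max i)])).
  move=> [r m] _ /=; congr pair; first by rewrite extf_max.
  by apply/ffunP => i; rewrite ffunE extf_lift.
move=> m _ /=; apply/ffunP => i; rewrite ffunE.
by case: unliftP => [i'|] ->; rewrite ?ffunE.
Qed.

Lemma ord_recr_lift (j : nat) (F : 'I_j.+1 -> nat) :
  (\sum_(i < j.+1) F i = \sum_(i < j) F (lift ord_max i) + F ord_max)%N.
Proof.
rewrite big_ord_recr /=; congr (_ + _)%N; apply: eq_bigr => i _; congr F.
by apply/val_inj; rewrite /= /bump leqNgt ltn_ord.
Qed.
Lemma ord_recr_liftR (j : nat) (F : 'I_j.+1 -> int) :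
  \prod_(i < j.+1) F i = \prod_(i < j) F (lift ord_max i) * F ord_max.
Proof.
rewrite big_ord_recr /=; congr (_ * _); apply: eq_bigr => i _; congr F.
by apply/val_inj; rewrite /= /bump leqNgt ltn_ord.
Qed.
Lemma ord_recr_liftN (j : nat) (F : 'I_j.+1 -> nat) :
  (\prod_(i < j.+1) F i = \prod_(i < j) F (lift ord_max i) * F ord_max)%N.
Proof.
rewrite big_ord_recr /=; congr (_ * _)%N; apply: eq_bigr => i _; congr F.
by apply/val_inj; rewrite /= /bump leqNgt ltn_ord.
Qed.

Lemma fact_prod_dvd (j : nat) (m : {ffun 'I_j -> 'I_4}) :
  (\prod_(i < j) (m i : nat)`! %| (\sum_(i < j) (m i : nat))`!)%N.
Proof.
elim: j m => [|j IH] m; first by rewrite !big_ord0.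
rewrite ord_recr_lift ord_recr_liftN.
set S := (\sum_(i < j) _)%N; set P := (\prod_(i < j) _)%N.
have H : (P %| S`!)%N by exact: (IH [ffun i => m (lift ord_max i)]) || (have := IH [ffun i => m (lift ord_max i)]; rewrite /P /S; under eq_bigr do rewrite ffunE; under [X in (_ %| X`!)%N]eq_bigr do rewrite ffunE; by []).
rewrite -(bin_fact (leq_addl S (m ord_max))) addnK.
rewrite mulnC [(_ * (S`!))%N]mulnC mulnA.
by rewrite mulnC; apply: dvdn_mul => //; apply: dvdn_mull.
Qed.

Definition Q (X : nat -> int) (s : nat) (k : int) (j : nat) : int :=
  \sum_(m : {ffun 'I_j -> 'I_4} | (\sum_(i<j) (m i : nat) == s)%N &&
        ((\sum_(i<j) (i:nat) * (m i : nat))%N%:Z == k))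
     ((s`! %/ \prod_(i<j) (m i : nat)`!)%N)%:Z * \prod_(i<j) X i ^+ (m i : nat).

Lemma coef_split (S r P : nat) : (P %| S`!)%N ->
  ((S + r)`! %/ (P * r`!) = 'C(S + r, r) * (S`! %/ P))%N.
Proof.
move=> hP.
have hP0 : (0 < P)%N by apply: dvdn_gt0 hP; exact: fact_gt0.
rewrite -(bin_fact (leq_addl S r)) addnK.
rewrite -{1}(divnK hP).
rewrite [(r`! * _)%N]mulnC mulnA -mulnA [((S`! %/ P) * P)%N]mulnC.
rewrite [X in (X %/ _)%N](_ : _ = ('C(S + r, r) * (S`! %/ P)) * (P * r`!))%N.
  by rewrite mulnK // muln_gt0 hP0 fact_gt0.
by rewrite -!mulnA; congr (_ * _)%N; rewrite mulnC -mulnA; congr (_ * _)%N; rewrite mulnC.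
Qed.

Lemma QS X s k j : Q X s k j.+1 = \sum_(r < 4)
  (if (r <= s)%N then ('C(s,r))%:Z * X j ^+ r * Q X (s - r) (k - ((j * r)%N)%:Z) j else 0).
Proof.
rewrite /Q big_mkcond sum_ffunS; apply: eq_bigr => r _.
have E1 m' : (\sum_(i < j.+1) (extf r m' i : nat) = \sum_(i<j) (m' i : nat) + r)%N.
  by rewrite ord_recr_lift extf_max; under eq_bigr do rewrite extf_lift.
have E2 m' : (\sum_(i < j.+1) (i : nat) * (extf r m' i : nat) = \sum_(i<j) (i : nat) * (m' i : nat) + j * r)%N.
  by rewrite ord_recr_lift extf_max /=; under eq_bigr do rewrite extf_lift /= /bump leqNgt ltn_ord add0n.
have E3 m' : (\prod_(i < j.+1) (extf r m' i : nat)`! = \prod_(i<j) (m' i : nat)`! * r`!)%N.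
  by rewrite ord_recr_liftN extf_max; under eq_bigr do rewrite extf_lift.
have E4 m' : \prod_(i < j.+1) X i ^+ (extf r m' i : nat) = \prod_(i<j) X i ^+ (m' i : nat) * X j ^+ r.
  by rewrite ord_recr_liftR extf_max; under eq_bigr do rewrite extf_lift /= /bump leqNgt ltn_ord add0n.
case: leqP => hrs; last first.
  apply: big1 => m' _; rewrite E1; case: eqP => //= h; exfalso; move: hrs; lia.
rewrite big_distrr /= [RHS]big_mkcond /=; apply: eq_bigr => m' _.
rewrite E1 E2 E3 E4.
have -> : ((\sum_(i < j) (m' i : nat) + r)%N == s) = (\sum_(i < j) (m' i : nat) == s - r)%N.
  apply/eqP/eqP; lia.
have -> : ((\sum_(i < j) (i:nat) * (m' i : nat) + j * r)%N%:Z == k) =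
   ((\sum_(i < j) (i:nat) * (m' i : nat))%N%:Z == k - ((j * r)%N)%:Z).
  by rewrite PoszD; apply/eqP/eqP => [<-|->]; rewrite ?addrK ?subrK.
case: eqP => hs //=; case: eqP => //= _.
have -> : s = ((\sum_(i < j) (m' i : nat)) + r)%N by lia.
rewrite coef_split ?fact_prod_dvd // addnK PoszM.
ring.
Qed.

Definition T0 (k : int) : int := if k == 0 then 1 else 0.
Definition T1 (X : nat -> int) (k : int) (j : nat) : int := \sum_(i < j) X i * T0 (k - (i : nat)%:Z).
Definition T2 (X : nat -> int) (k : int) (j : nat) : int := \sum_(i < j) X i * T1 X (k - (i : nat)%:Z) j.
Definition T3 (X : nat -> int) (k : int) (j : nat) : int := \sum_(i < j) X i * T2 X (k - (i : nat)%:Z) j.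

Lemma T1S X k j : T1 X k j.+1 = T1 X k j + X j * T0 (k - j%:Z).
Proof. by rewrite /T1 big_ord_recr. Qed.

Lemma T2S X k j : T2 X k j.+1 =
  T2 X k j + 2 * X j * T1 X (k - j%:Z) j + X j ^+ 2 * T0 (k - ((j * 2)%N)%:Z).
Proof.
rewrite /T2; under eq_bigr do rewrite T1S mulrDr.
rewrite big_split /= big_ord_recr /=.
have -> : \sum_(i < j.+1) X i * (X j * T0 (k - (i : nat)%:Z - j%:Z)) = X j * T1 X (k - j%:Z) j.+1.
  rewrite /T1 big_distrr /=; apply: eq_bigr => i _; rewrite addrAC; ring.
rewrite T1S.
have -> : k - j%:Z - j%:Z = k - ((j * 2)%N)%:Z by rewrite PoszM -addrA -opprD; congr (_ - _); ring.
ring.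
Qed.

Lemma T3S X k j : T3 X k j.+1 =
  T3 X k j + 3 * X j * T2 X (k - j%:Z) j + 3 * X j ^+ 2 * T1 X (k - ((j * 2)%N)%:Z) j
  + X j ^+ 3 * T0 (k - ((j * 3)%N)%:Z).
Proof.
rewrite /T3; under eq_bigr do rewrite T2S !mulrDr.
rewrite !big_split /= big_ord_recr /=.
have -> : \sum_(i < j.+1) X i * (2 * X j * T1 X (k - (i : nat)%:Z - j%:Z) j)
   = 2 * X j * (T2 X (k - j%:Z) j + X j * T1 X (k - ((j * 2)%N)%:Z) j).
  rewrite big_ord_recr /= mulrDr; congr (_ + _).
    rewrite /T2 big_distrr /=; apply: eq_bigr => i _; rewrite addrAC; ring.
  have -> : k - j%:Z - j%:Z = k - ((j * 2)%N)%:Z by rewrite PoszM -addrA -opprD; congr (_ - _); ring.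
  ring.
have -> : \sum_(i < j.+1) X i * (X j ^+ 2 * T0 (k - (i : nat)%:Z - ((j * 2)%N)%:Z))
   = X j ^+ 2 * T1 X (k - ((j * 2)%N)%:Z) j.+1.
  rewrite /T1 big_distrr /=; apply: eq_bigr => i _; rewrite addrAC; ring.
rewrite T1S.
have -> : k - ((j * 2)%N)%:Z - j%:Z = k - ((j * 3)%N)%:Z by rewrite !PoszM -addrA -opprD; congr (_ - _); ring.
ring.
Qed.

Lemma Q0j X s k : Q X s k 0 = if (s == 0%N) && (k == 0) then 1 else 0.
Proof.
rewrite /Q.
under eq_bigl do rewrite !big_ord0.
under eq_bigr do rewrite !big_ord0 divn1 mulr1.
rewrite eq_sym [(_ == k)]eq_sym.
case: ifP => h; last by rewrite big_pred0.
move/andP: h => [/eqP hs _]; have -> : s = 0%N by lia.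
rewrite big_const (_ : #|_| = 1%N) //. by have := card_ffun 'I_0 'I_4; rewrite !card_ord.
Qed.

Lemma QT0 X k j : Q X 0 k j = T0 k.
Proof.
elim: j k => [|j IH] k; first by rewrite Q0j /T0 eqxx.
by rewrite QS !big_ord_recr big_ord0 /= bin0 expr0 subn0 muln0 subr0 IH !add0r !addr0 !mul1r.
Qed.

Lemma QT1 X k j : Q X 1 k j = T1 X k j.
Proof.
elim: j k => [|j IH] k; first by rewrite Q0j /T1 big_ord0.
rewrite QS !big_ord_recr big_ord0 /= muln0 muln1 -[Posz 0]/(0:int) subr0 IH QT0 T1S.
rewrite !bin0 !binn subr0 expr0 expr1 !mul1r add0r addr0; done.
Qed.

Lemma QT2 X k j : Q X 2 k j = T2 X k j.
Proof.
elim: j k => [|j IH] k; first by rewrite Q0j /T2 big_ord0.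
rewrite QS !big_ord_recr big_ord0 /= muln0 muln1 IH QT0 QT1 T2S.
rewrite !bin0 !binn subr0 expr0 expr1 !mul1r add0r addr0.
by rewrite (_ : 'C(2,1) = 2%N).
Qed.

Lemma QT3 X k j : Q X 3 k j = T3 X k j.
Proof.
elim: j k => [|j IH] k; first by rewrite Q0j /T3 big_ord0.
rewrite QS !big_ord_recr big_ord0 /= muln0 muln1 IH QT0 QT1 QT2 T3S.
rewrite !bin0 !binn subr0 expr0 expr1 !mul1r add0r.
by rewrite (_ : 'C(3,1) = 3%N) // (_ : 'C(3,2) = 3%N).
Qed.

Lemma Pkj_T3 X k j : Pkj k j X = T3 X k%:Z j.
Proof.
rewrite -QT3 /Pkj /Q; apply: eq_big => [m|m _]; first by rewrite eqz_nat.
by [].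
Qed.

Lemma T0_neq k : k != 0 -> T0 k = 0.
Proof. by rewrite /T0 => /negbTE ->. Qed.
Lemma T1_neg X k j : k < 0 -> T1 X k j = 0.
Proof. move=> hk; apply: big1 => i _; rewrite T0_neq ?mulr0 //; apply/eqP; lia. Qed.
Lemma T2_neg X k j : k < 0 -> T2 X k j = 0.
Proof. move=> hk; apply: big1 => i _; rewrite T1_neg ?mulr0 //; lia. Qed.
Lemma T3_neg X k j : k < 0 -> T3 X k j = 0.
Proof. move=> hk; apply: big1 => i _; rewrite T2_neg ?mulr0 //; lia. Qed.

Lemma T1_val X (t n : nat) : T1 X t%:Z n = if (t < n)%N then X t else 0.
Proof.
elim: n => [|n IH]; first by rewrite /T1 big_ord0.
rewrite T1S IH /T0.
case: (ltngtP t n) => h.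
- rewrite (_ : (t < n.+1)%N = true); last by lia.
  by rewrite ifF ?mulr0 ?addr0 //; apply/eqP; lia.
- rewrite (_ : (t < n.+1)%N = false); last by lia.
  by rewrite ifF ?mulr0 ?addr0 //; apply/eqP; lia.
- by subst t; rewrite ltnSn subrr eqxx add0r mulr1.
Qed.

Lemma T2_0 X j : (0 < j)%N -> T2 X 0 j = X 0%N ^+ 2.
Proof.
elim: j => [//|j IH] _; rewrite T2S; case: j IH => [|j] IH.
  by rewrite /T2 /T1 !big_ord0 /T0 /=; ring.
rewrite IH // T1_neg ?T0_neq; first ring.
- apply/eqP; lia.
- lia.
Qed.

Lemma T2_1 X j : (1 < j)%N -> T2 X 1 j = 2 * X 0%N * X 1%N.
Proof.
elim: j => [//|j IH] hj; rewrite T2S; case: j IH hj => [|[|j]] IH hj //.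
  have -> : T2 X 1 1 = 0.
    by rewrite T2S /T2 /T1 !big_ord0 /T0 /=; ring.
  rewrite (T1_val X 0) /T0 /=; ring.
rewrite IH // T1_neg ?T0_neq; first ring.
- apply/eqP; lia.
- lia.
Qed.

Lemma T3_stable X (s n : nat) : (s < n)%N -> T3 X s%:Z n = T3 X s%:Z s.+1.
Proof.
elim: n => [//|n IH] hs.
case: (ltngtP s n) => h; last by subst.
- rewrite T3S IH // T2_neg ?T1_neg ?T0_neq; first ring.
  + apply/eqP; lia.
  + lia.
  + lia.
- lia.
Qed.

Lemma C_gen X M : (2 <= M)%N -> T3 X (M.+1)%:Z M.+2 =
  T3 X (M.+1)%:Z M + 3 * X 0%N ^+ 2 * X M.+1 + 6 * X 0%N * X 1%N * X M.
Proof.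
move=> hM.
rewrite T3S T3S.
have -> : (M.+1)%:Z - (M.+1)%:Z = 0 by rewrite subrr.
have -> : (M.+1)%:Z - M%:Z = 1 by lia.
rewrite T2_0 // T2_1 // (T1_neg _ _ (k := _ - ((M * 2)%N)%:Z)); last by lia.
rewrite (T1_neg _ _ (k := _ - ((M.+1 * 2)%N)%:Z)); last by lia.
rewrite (T0_neq (k := _ - ((M * 3)%N)%:Z)); last by apply/eqP; lia.
rewrite (T0_neq (k := _ - ((M.+1 * 3)%N)%:Z)); last by apply/eqP; lia.
ring.
Qed.

Lemma C_0 X : T3 X 0 1 = X 0%N ^+ 3.
Proof. by rewrite T3S /T3 /T2 /T1 !big_ord0 /T0 /=; ring. Qed.
Lemma C_1 X : T3 X 1 2 = 3 * X 0%N ^+ 2 * X 1%N.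
Proof.
rewrite T3S T2_0 // T1_neg ?T0_neq //.
rewrite T3S /T3 /T2 /T1 !big_ord0 /T0 /=; ring.
Qed.
Lemma C_2 X : T3 X 2 3 = 3 * X 0%N ^+ 2 * X 2%N + 3 * X 0%N * X 1%N ^+ 2.
Proof.
rewrite T3S T2_0 // T1_neg ?T0_neq //.
rewrite T3S (T1_val X 0) /= T0_neq // .
have -> : T2 X (2 - 1) 1 = 0 by rewrite T2S /T2 /T1 !big_ord0 /T0 /=; ring.
rewrite T3S /T3 /T2 /T1 !big_ord0 /T0 /=; ring.
Qed.
Lemma P32 X : Pkj 3 2 X = X 1%N ^+ 3.
Proof.
rewrite Pkj_T3 T3S (T1_val X 1) /=.
have -> : T2 X (3 - 1) 1 = 0 by rewrite T2S /T2 /T1 !big_ord0 /T0 /=; ring.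
rewrite T3S /T3 /T2 /T1 !big_ord0 /T0 /=; ring.
Qed.

Lemma modz_sum (d : int) n (f g : 'I_n -> int) :
  (forall i, (f i == g i %[mod d])%Z) -> (\sum_i f i == \sum_i g i %[mod d])%Z.
Proof.
move=> h; rewrite eqz_mod_dvd -sumrB; apply: rpred_sum => i _; rewrite -eqz_mod_dvd; exact: h.
Qed.

Lemma modz_mull (d c a b : int) : (a == b %[mod d])%Z -> (c * a == c * b %[mod d])%Z.
Proof. by rewrite !eqz_mod_dvd -mulrBr; apply: dvdz_mull. Qed.

Lemma swap_sum n m (c : 'I_n -> int) (Y : 'I_m -> int) (G : 'I_m -> 'I_n -> int) :
  \sum_s c s * (\sum_i Y i * G i s) = \sum_i Y i * (\sum_s c s * G i s).
Proof.
under eq_bigr do rewrite big_distrr /=.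
rewrite exchange_big /=; apply: eq_bigr => i _; rewrite big_distrr /=.
by apply: eq_bigr => s _; rewrite mulrCA.
Qed.

Lemma sum_pow3_T0 (n t : nat) :
  \sum_(s < n) 3 ^+ s * T0 ((s : nat)%:Z - t%:Z) = if (t < n)%N then 3 ^+ t else 0.
Proof.
rewrite -(T1_val (fun s => 3 ^+ s)) /T1; apply: eq_bigr => s _.
congr (_ * _); rewrite /T0 -oppr_eq0 opprB.
by [].
Qed.

Lemma cube_expand n (a : 'I_n -> int) :
  (\sum_i a i) ^+ 3 = \sum_i \sum_(i' < n) \sum_(i'' < n) a i * a i' * a i''.
Proof.
rewrite exprS expr2 big_distrl /=; apply: eq_bigr => i _.
rewrite big_distrl /= big_distrr /=; apply: eq_bigr => i' _.
by rewrite big_distrr /= big_distrr /=; apply: eq_bigr => i'' _; ring.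
Qed.

Definition gg (n t : nat) : int := if (t < n)%N then 3 ^+ t else 0.

Lemma L_T1 (X : nat -> int) n (t : nat) :
  \sum_(s<n) 3^+s * T1 X ((s:nat)%:Z - t%:Z) n = \sum_(i<n) X i * gg n (t + i).
Proof.
rewrite /T1 (swap_sum (fun s : 'I_n => 3 ^+ s) (fun i : 'I_n => X i)
          (fun i s => T0 ((s : nat)%:Z - t%:Z - (i : nat)%:Z))).
apply: eq_bigr => i _; congr (_ * _); rewrite /gg -sum_pow3_T0.
by apply: eq_bigr => s _; rewrite PoszD opprD addrA.
Qed.

Lemma L_T2 (X : nat -> int) n (t : nat) :
  \sum_(s<n) 3^+s * T2 X ((s:nat)%:Z - t%:Z) n =
  \sum_(i<n) X i * \sum_(i'<n) X i' * gg n (t + i + i').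
Proof.
rewrite /T2 (swap_sum (fun s : 'I_n => 3 ^+ s) (fun i : 'I_n => X i)
          (fun i s => T1 X ((s : nat)%:Z - t%:Z - (i : nat)%:Z) n)).
apply: eq_bigr => i _; congr (_ * _); rewrite -L_T1.
by apply: eq_bigr => s _; rewrite PoszD opprD addrA.
Qed.

Lemma cube_mod (X : nat -> int) n : ((\sum_(k<n) X k * 3^+k)^+3 ==
   \sum_(s<n) 3^+s * T3 X (s:nat)%:Z (s.+1) %[mod 3^+n])%Z.
Proof.
have -> : \sum_(s<n) 3^+s * T3 X (s:nat)%:Z (s.+1) = \sum_(s<n) 3^+s * T3 X (s:nat)%:Z n.
  by apply: eq_bigr => s _; rewrite T3_stable.
rewrite /T3.
rewrite (swap_sum (fun s : 'I_n => 3 ^+ s) (fun i : 'I_n => X i)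
          (fun i s => T2 X ((s : nat)%:Z - (i : nat)%:Z) n)).
rewrite [Y in (_ == Y %[mod _])%Z](eq_bigr (fun i : 'I_n => X i * \sum_(i'<n) X i' * \sum_(i''<n) X i'' * gg n (i + i' + i''))); last first.
  by move=> i _; congr (_ * _); apply: L_T2.
rewrite [Y in (_ == Y %[mod _])%Z](_ : _ = \sum_(i < n) \sum_(i' < n) \sum_(i'' < n)
   (X i * X i' * X i'') * gg n (i + i' + i'')); last first.
  apply: eq_bigr => i _; rewrite big_distrr /=; apply: eq_bigr => i' _.
  rewrite big_distrr big_distrr /=; apply: eq_bigr => i'' _; ring.
rewrite cube_expand; apply: modz_sum => i; apply: modz_sum => i'; apply: modz_sum => i''.
rewrite (_ : _ * _ * _ = (X i * X i' * X i'') * 3 ^+ (i + i' + i'')); last by rewrite !exprD; ring.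
apply: modz_mull; rewrite /gg; case: ifP => // h.
rewrite eqz_mod_dvd subr0; apply: dvdz_exp2l; lia.
Qed.

Definition DD (X A : nat -> int) (s : nat) : int := \sum_(i < s.-2) X (s - 3 - i)%N * A i.

Lemma DD_T1 (X A : nat -> int) n s : (s < n)%N ->
  DD X A s = \sum_(i < n) A i * T1 X ((s : nat)%:Z - ((i : nat) + 3)%N%:Z) n.
Proof.
move=> hs; rewrite /DD (big_ord_widen n (fun i => X (s - 3 - i)%N * A i)); last by lia.
rewrite big_mkcond /=; apply: eq_bigr => i _.
case: ifP => h.
  have -> : (s : nat)%:Z - ((i : nat) + 3)%N%:Z = (s - 3 - i)%N%:Z by lia.
  rewrite T1_val ifT; first by rewrite mulrC.
  lia.
by rewrite T1_neg ?mulr0 //; lia.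
Qed.

Lemma ax_mod (X A : nat -> int) n :
  (3^+3 * (\sum_(k<n) A k * 3^+k) * (\sum_(k<n) X k * 3^+k) ==
     \sum_(s<n) 3^+s * DD X A s %[mod 3^+n])%Z.
Proof.
rewrite [Y in (_ == Y %[mod _])%Z](_ : _ = \sum_(s < n) 3^+s *
     \sum_(i < n) A i * T1 X ((s : nat)%:Z - ((i : nat) + 3)%N%:Z) n); last first.
  by apply: eq_bigr => s _; rewrite (DD_T1 _ _ (ltn_ord s)).
rewrite (swap_sum (fun s : 'I_n => 3 ^+ s) (fun i : 'I_n => A i)
          (fun i s => T1 X ((s : nat)%:Z - ((i : nat) + 3)%N%:Z) n)).
rewrite [Y in (_ == Y %[mod _])%Z](eq_bigr (fun i : 'I_n => A i * \sum_(l<n) X l * gg n (i + 3 + l))); last first.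
  by move=> i _; congr (_ * _); apply: L_T1.
rewrite (_ : _ * _ * _ = \sum_(i<n) A i * \sum_(l<n) X l * 3^+(i + 3 + l)); last first.
  rewrite -mulrA big_distrl big_distrr /=; apply: eq_bigr => i _.
  rewrite !big_distrr /=; apply: eq_bigr => l _; rewrite !exprD; ring.
apply: modz_sum => i; apply: modz_mull; apply: modz_sum => l; apply: modz_mull.
rewrite /gg; case: ifP => // h.
rewrite eqz_mod_dvd subr0; apply: dvdz_exp2l; lia.
Qed.

Definition RR (x : nat -> nat) (N : nat) : int :=
  let X := zd x in
  if N == 1%N then X 0%N ^+ 2 * X 1%N
  else if N == 2%N then X 0%N ^+ 2 * X 2%N + X 0%N * X 1%N ^+ 2
  else X 0%N ^+ 2 * X N + 2 * X 0%N * X 1%N * X N.-1.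

Lemma step_id (a x : nat -> nat) N : (1 <= N)%N ->
  Eterm a x N.+1 + 3 * RR x N.+1 =
  RR x N + T3 (zd x) (N.+1)%:Z N.+2 + DD (zd x) (zd a) N.+1.
Proof.
case: N => [//|[|[|M]]] _.
- rewrite /Eterm /RR /= C_2 /DD big_ord0; ring.
- rewrite /Eterm /RR /= P32 (C_gen _ (M := 2)) // -Pkj_T3 P32 /DD big_ord1 /=; ring.
- rewrite /Eterm /RR /= (C_gen _ (M := M.+3)) // -Pkj_T3 /DD /=; ring.
Qed.

Definition GG (a x : nat -> nat) (N : nat) : int :=
  zd x 0%N ^+ 3 + \sum_(2 <= k < N.+1) 3 ^+ k * Eterm a x k.

Lemma G_identity (a x : nat -> nat) N : (1 <= N)%N ->
  GG a x N + 3 ^+ N.+1 * RR x N =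
  \sum_(s < N.+1) 3 ^+ s * (T3 (zd x) (s : nat)%:Z s.+1 + DD (zd x) (zd a) s).
Proof.
elim: N => [//|N IH] _.
case: N IH => [|N] IH.
  rewrite /GG /RR big_geq // !big_ord_recr big_ord0 /= C_0 C_1 /DD !big_ord0; ring.
rewrite big_ord_recr /= -IH // /GG big_nat_recr //=.
have := step_id a x (N := N.+1) isT.
rewrite !exprS; move=> H.
have -> : T3 (zd x) (N.+2)%:Z N.+3 + DD (zd x) (zd a) N.+2 = Eterm a x N.+2 + 3 * RR x N.+2 - RR x N.+1 by rewrite H; ring.
ring.
Qed.

Definition okN (a b x : nat -> nat) (N : nat) : Prop :=
  (zd x 0%N ^+ 3 == zd b 0%N + 3 * zd b 1%N %[mod 9])%Z /\
  (forall k, (2 <= k)%N -> (k <= N)%N -> (Eterm a x k + Mseq a b x k.-1 == zd b k %[mod 3])%Z).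

Lemma trunc3S d n : trunc3 d n.+1 = trunc3 d n + zd d n * 3 ^+ n.
Proof. by rewrite /trunc3 big_ord_recr. Qed.


Lemma carry (a b x : nat -> nat) N : (1 <= N)%N ->
  (okN a b x N -> GG a x N = trunc3 b N.+1 + 3 ^+ N.+1 * Mseq a b x N) /\
  ((GG a x N == trunc3 b N.+1 %[mod 3 ^+ N.+1])%Z -> okN a b x N).
Proof.
elim: N => [//|N IH] _; case: N IH => [|N] IH.
  have hG : GG a x 1 = zd x 0%N ^+ 3 by rewrite /GG big_geq // addr0.
  have hB : trunc3 b 2 = zd b 0%N + 3 * zd b 1%N by rewrite !trunc3S /trunc3 big_ord0; ring.
  rewrite hG hB /=; split.
    move=> [h9 _]; move: h9; rewrite eqz_mod_dvd => h9.
    set u := (zd x 0%N ^+ 3 - zd b 0%N - 3 * zd b 1%N).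
    have hu : u = zd x 0%N ^+ 3 - (zd b 0%N + 3 * zd b 1%N) by rewrite /u; ring.
    have := divzK (m := u) (d := 9); rewrite hu => /(_ h9) hq.
    rewrite -hu in hq *.
    apply/eqP; rewrite -subr_eq0; apply/eqP.
    transitivity (u - (u %/ 9)%Z * 9); last by rewrite hq subrr.
    rewrite /u; ring.
  move=> h; split => [|k h2 h1]; last by exfalso; move: h2 h1; lia.
  by move: h; rewrite (_ : 3 ^+ 2 = 9 :> int).
have [IH1 IH2] := IH isT.
have hG : GG a x N.+2 = GG a x N.+1 + 3 ^+ N.+2 * Eterm a x N.+2.
  by rewrite /GG big_nat_recr //= addrA.
have hB : trunc3 b N.+3 = trunc3 b N.+2 + zd b N.+2 * 3 ^+ N.+2 := trunc3S _ _.
have hM : Mseq a b x N.+2 = ((Eterm a x N.+2 + Mseq a b x N.+1 - zd b N.+2) %/ 3)%Z by [].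
have okdown : okN a b x N.+2 -> okN a b x N.+1.
  by move=> [h9 hk]; split => // k h2 h3; apply: hk => //; lia.
split.
  move=> hok; have hok1 := okdown hok; rewrite hG (IH1 hok1) hB hM.
  have hc : (3 %| Eterm a x N.+2 + Mseq a b x N.+1 - zd b N.+2)%Z.
    by have := hok.2 N.+2 isT (leqnn _); rewrite eqz_mod_dvd.
  have hq := divzK hc; set q := (_ %/ 3)%Z in hq *.
  have hE : Eterm a x N.+2 = q * 3 - Mseq a b x N.+1 + zd b N.+2 by rewrite hq; ring.
  rewrite hE !exprS; ring.
move=> hmod.
have hdiff : GG a x N.+2 - trunc3 b N.+3 = (GG a x N.+1 - trunc3 b N.+2)
    + 3 ^+ N.+2 * (Eterm a x N.+2 - zd b N.+2) by rewrite hG hB; ring.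
have h1 : (3 ^+ N.+2 %| GG a x N.+1 - trunc3 b N.+2)%Z.
  have hd : (3 ^+ N.+2 %| GG a x N.+2 - trunc3 b N.+3)%Z.
    apply: dvdz_trans (dvdz_exp2l _ (leqnSn _)) _; by rewrite -eqz_mod_dvd.
  rewrite hdiff rpredDr in hd => //.
  by apply: dvdz_mulr; apply: dvdzz.
have hok1 : okN a b x N.+1 by apply: IH2; rewrite eqz_mod_dvd.
have heq := IH1 hok1.
have hw : (3 %| Eterm a x N.+2 + Mseq a b x N.+1 - zd b N.+2)%Z.
  move: hmod; rewrite eqz_mod_dvd hG heq hB.
  rewrite (_ : _ - _ = 3 ^+ N.+2 * (Eterm a x N.+2 + Mseq a b x N.+1 - zd b N.+2)); last by ring.
  by rewrite [3 ^+ N.+3]exprSr dvdz_mul2l // expf_neq0.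
split; first exact: hok1.1.
move=> k h2 h3; case: (ltngtP k N.+2) => hk; last 1 first.
- by subst k; rewrite eqz_mod_dvd.
- by apply: hok1.2 => //; lia.
- lia.
Qed.

Lemma modz_trans (d u v w : int) :
  (u == v %[mod d])%Z -> (v == w %[mod d])%Z -> (u == w %[mod d])%Z.
Proof. by move=> /eqP -> /eqP ->. Qed.
Lemma modz_sym (d u v : int) : (u == v %[mod d])%Z -> (v == u %[mod d])%Z.
Proof. by move=> /eqP ->. Qed.

Lemma Zmod (a x : nat -> nat) n :
  (trunc3 x n ^+ 3 + 3 ^+ 3 * trunc3 a n * trunc3 x n ==
   \sum_(s<n) 3^+s * (T3 (zd x) (s : nat)%:Z s.+1 + DD (zd x) (zd a) s) %[mod 3^+n])%Z.
Proof.
under eq_bigr do rewrite mulrDr.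
rewrite big_split /=.
have h1 := cube_mod (zd x) n; have h2 := ax_mod (zd x) (zd a) n.
rewrite eqz_mod_dvd in h1; rewrite eqz_mod_dvd in h2.
rewrite eqz_mod_dvd.
rewrite (_ : _ - _ = ((\sum_(k<n) zd x k * 3^+k)^+3 - \sum_(s<n) 3^+s * T3 (zd x) (s : nat)%:Z s.+1)
   + (3^+3 * (\sum_(k<n) zd a k * 3^+k) * (\sum_(k<n) zd x k * 3^+k) - \sum_(s<n) 3^+s * DD (zd x) (zd a) s)).
  exact: rpredD.
rewrite /trunc3 /zd; ring.
Qed.

Lemma GZ (a x : nat -> nat) N : (1 <= N)%N ->
  (trunc3 x N.+1 ^+ 3 + 3 ^+ 3 * trunc3 a N.+1 * trunc3 x N.+1 == GG a x N %[mod 3^+N.+1])%Z.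
Proof.
move=> hN; apply: modz_trans (Zmod a x N.+1) _.
rewrite -G_identity // eqz_mod_dvd (_ : _ - _ = 3 ^+ N.+1 * RR x N); last by ring.
by apply: dvdz_mulr; apply: dvdzz.
Qed.


Theorem theorem3p5 (a b x : nat -> nat)
  (ha : digits3 a) (ha0 : a 0%N <> 0%N)
  (hb : digits3 b) (hb0 : b 0%N <> 0%N)
  (hb01 : (b 0%N = 1%N /\ b 1%N = 0%N) \/ (b 0%N = 2%N /\ b 1%N = 2%N))
  (hx : digits3 x) (hx0 : x 0%N <> 0%N) :
  cubic_solution a b x <-> congruences a b x.
Proof.
split.
  move=> hsol.
  have okall N : (1 <= N)%N -> okN a b x N.
    move=> hN; apply: (carry a b x hN).2.
    apply: modz_trans (modz_sym (GZ a x hN)) _; exact: hsol.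
  have [h9 _] := okall 1%N isT.
  split => //.
  - move: h9; rewrite !eqz_mod_dvd => h9.
    rewrite (_ : _ - _ = (zd x 0%N ^+ 3 - (zd b 0%N + 3 * zd b 1%N)) + 3 * zd b 1%N); last by ring.
    apply: rpredD; last by apply: dvdz_mulr; apply: dvdzz.
    apply: dvdz_trans h9; exact: (@dvdz_mulr 3 3 3 (dvdzz 3)).
  - by move=> k hk; apply: (okall k (ltnW hk)).2.
move=> [c1 c2 c3].
have okall N : okN a b x N by split => // k h2 _; apply: c3.
move=> [|[|N]].
- by rewrite eqz_mod_dvd expr0 dvd1z.
- apply: modz_trans (Zmod a x 1) _.
  by rewrite big_ord1 /= C_0 /DD big_ord0 addr0 /trunc3 big_ord1 /= expr0 mul1r mulr1 expr1.
- apply: modz_trans (GZ a x (N := N.+1) isT) _.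
  rewrite (carry a b x (N := N.+1) isT).1 // eqz_mod_dvd (_ : _ - _ = 3 ^+ N.+2 * Mseq a b x N.+1); last by ring.
  by apply: dvdz_mulr; apply: dvdzz.
Qed.
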